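(* Let $q$ and $\lambda\in(0,\infty)$ be as in the context and let $U_1=(P_1,Q_1,R_1)^T$ be the unique solution of the Appell system with $\lim_{x\to\infty}U_1(x,\lambda)=(\sqrt\lambda,0,1/\sqrt\lambda)^T$. Fix $c>0$ and let $\gamma(x)=\int_c^x\frac{dt}{R_1(t,\lambda)}$. Define \[U_2=\begin{pmatrix}P_1\cos2\gamma+(Q_1/R_1)\sin2\gamma-(2/R_1)\cos2\gamma\\ Q_1\cos2\gamma+2\sin2\gamma\\ R_1\cos2\gamma\end{pmatrix},\quad U_3=\begin{pmatrix}P_1\sin2\gamma-(Q_1/R_1)\cos2\gamma-(2/R_1)\sin2\gamma\\ Q_1\sin2\gamma-2\cos2\gamma\\ R_1\sin2\gamma\end{pmatrix}.\] Then every solution $U$ of the Appell system can be written as $U=\beta_1U_1+\beta_2U_2+\beta_3U_3$ for constants $\beta_1,\beta_2,\beta_3$ (in particular $U_2,U_3$ are solutions).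
   Context: $q(x)=\frac{q_0}{x^2}+\frac{q_1}{x}+\sum_{n\ge0}q_{n+2}x^n$ with real coefficients, the series convergent on $(0,\infty)$, $q_0\ge-\tfrac14$, $q_0,q_1$ not both zero; for some $x_0>0$ either $q\in L_1(x_0,\infty)$, or $q'\in L_1(x_0,\infty)$, $q\in AC_{loc}[x_0,\infty)$ and $q\to0$ at $\infty$. Appell system: $(P,Q,R)'=M(P,Q,R)^T$ with $M=\begin{pmatrix}0&\lambda-q&0\\-2&0&2(\lambda-q)\\0&-1&0\end{pmatrix}$; under these hypotheses $U_1$ exists and is unique, and $R_1(x,\lambda)>0$ for all $x>0$, so $\gamma$ is well defined. *)

(* Defs.v *)
From Stdlib Require Import Reals Lra.
From Coquelicot Require Import Coquelicot.
Open Scope R_scope.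

Definition qfun (a : nat -> R) (x : R) : R :=
  a 0%nat / x ^ 2 + a 1%nat / x + Series (fun n => a (n + 2)%nat * x ^ n).

Definition q_hyp (a : nat -> R) : Prop :=
  (forall x, 0 < x -> ex_series (fun n => a (n + 2)%nat * x ^ n)) /\
  a 0%nat >= - / 4 /\
  ~ (a 0%nat = 0 /\ a 1%nat = 0) /\
  exists x0, 0 < x0 /\
    (
      ex_RInt_gen (fun t => Rabs (qfun a t)) (at_point x0) (Rbar_locally p_infty)
    \/ (* q' in L1(x0,oo), q AC_loc on [x0,oo) (automatic: q is analytic), q -> 0 *)
      (ex_RInt_gen (fun t => Rabs (Derive (qfun a) t)) (at_point x0)
                   (Rbar_locally p_infty)
       /\ is_lim (qfun a) p_infty 0)).

Definition appell_sol (q : R -> R) (lam : R) (P Q S : R -> R) : Prop :=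
  forall x, 0 < x ->
    is_derive P x ((lam - q x) * Q x) /\
    is_derive Q x (-2 * P x + 2 * (lam - q x) * S x) /\
    is_derive S x (- Q x).

Definition gammaf (R1 : R -> R) (c x : R) : R := RInt (fun t => / R1 t) c x.

Definition U2P (P1 Q1 R1 : R -> R) (c x : R) : R :=
  P1 x * cos (2 * gammaf R1 c x) + (Q1 x / R1 x) * sin (2 * gammaf R1 c x)
  - (2 / R1 x) * cos (2 * gammaf R1 c x).
Definition U2Q (P1 Q1 R1 : R -> R) (c x : R) : R :=
  Q1 x * cos (2 * gammaf R1 c x) + 2 * sin (2 * gammaf R1 c x).
Definition U2R (P1 Q1 R1 : R -> R) (c x : R) : R :=
  R1 x * cos (2 * gammaf R1 c x).

Definition U3P (P1 Q1 R1 : R -> R) (c x : R) : R :=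
  P1 x * sin (2 * gammaf R1 c x) - (Q1 x / R1 x) * cos (2 * gammaf R1 c x)
  - (2 / R1 x) * sin (2 * gammaf R1 c x).
Definition U3Q (P1 Q1 R1 : R -> R) (c x : R) : R :=
  Q1 x * sin (2 * gammaf R1 c x) - 2 * cos (2 * gammaf R1 c x).
Definition U3R (P1 Q1 R1 : R -> R) (c x : R) : R :=
  R1 x * sin (2 * gammaf R1 c x).

(* Main.v *)
Require Import Defs.
From Stdlib Require Import Reals Lra Nsatz.
From Coquelicot Require Import Coquelicot.
Open Scope R_scope.

Lemma Dm (f g : R -> R) x a b : is_derive f x a -> is_derive g x b ->
  is_derive (fun t => f t * g t) x (a * g x + f x * b).
Proof. intros. apply (is_derive_mult f g x a b); auto. intros; apply Rmult_comm. Qed.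
Lemma Dp (f g : R -> R) x a b : is_derive f x a -> is_derive g x b ->
  is_derive (fun t => f t + g t) x (a + b).
Proof. intros. apply (is_derive_plus f g x a b); auto. Qed.
Lemma Ds (f g : R -> R) x a b : is_derive f x a -> is_derive g x b ->
  is_derive (fun t => f t - g t) x (a - b).
Proof. intros. apply (is_derive_minus f g x a b); auto. Qed.
Lemma Dc (k : R) x : is_derive (fun _ => k) x 0.
Proof. apply (is_derive_const k x). Qed.
Lemma Dd (f g : R -> R) x a b : is_derive f x a -> is_derive g x b -> g x <> 0 ->
  is_derive (fun t => f t / g t) x ((a * g x - f x * b) / g x ^ 2).
Proof. apply is_derive_div. Qed.
Lemma Dcos (g : R -> R) x b : is_derive g x b ->
  is_derive (fun t => cos (2 * g t)) x (- sin (2 * g x) * (2 * b)).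
Proof.
  intros H. assert (H2 : is_derive (fun t => 2 * g t) x (2 * b)).
  { replace (2*b) with (0 * g x + 2 * b) by ring. apply (Dm (fun _ => 2) g); auto; apply Dc. }
  pose proof (is_derive_comp cos (fun t => 2 * g t) x _ _ (is_derive_cos (2 * g x)) H2).
  simpl in H0. unfold scal in H0; simpl in H0; unfold mult in H0; simpl in H0.
  now rewrite Rmult_comm.
Qed.
Lemma Dsin (g : R -> R) x b : is_derive g x b ->
  is_derive (fun t => sin (2 * g t)) x (cos (2 * g x) * (2 * b)).
Proof.
  intros H. assert (H2 : is_derive (fun t => 2 * g t) x (2 * b)).
  { replace (2*b) with (0 * g x + 2 * b) by ring. apply (Dm (fun _ => 2) g); auto; apply Dc. }
  pose proof (is_derive_comp sin (fun t => 2 * g t) x _ _ (is_derive_sin (2 * g x)) H2).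
  simpl in H0. unfold scal in H0; simpl in H0; unfold mult in H0; simpl in H0.
  now rewrite Rmult_comm.
Qed.
Lemma Deq (f : R -> R) x l l' : is_derive f x l -> l = l' -> is_derive f x l'.
Proof. intros H ->; exact H. Qed.

Definition Bf (P Q S P' Q' S' : R -> R) x := Q x * Q' x - 2 * (P x * S' x + S x * P' x).

Lemma bil_const q lam P Q S P' Q' S' :
  appell_sol q lam P Q S -> appell_sol q lam P' Q' S' ->
  forall x, 0 < x -> Bf P Q S P' Q' S' x = Bf P Q S P' Q' S' 1.
Proof.
  intros H1 H2.
  assert (D : forall x, 0 < x -> is_derive (Bf P Q S P' Q' S') x 0).
  { intros x hx. destruct (H1 x hx) as [a [b c]]. destruct (H2 x hx) as [a' [b' c']].
    unfold Bf. eapply Deq.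
    - apply Ds; [apply Dm; eassumption|]. apply Dm; [apply Dc|]. apply Dp; apply Dm; eassumption.
    - simpl. ring. }
  intros x hx.
  destruct (MVT_gen (Bf P Q S P' Q' S') 1 x (fun _ => 0)) as [c [hc e]].
  - intros y hy. apply D. assert (0 < Rmin 1 x) by (apply Rmin_glb_lt; lra). lra.
  - intros y hy. apply continuity_pt_filterlim. apply (ex_derive_continuous (K:=R_AbsRing) (V:=R_NormedModule)).
    eexists. apply D. assert (0 < Rmin 1 x) by (apply Rmin_glb_lt; lra). lra.
  - lra.
Qed.
Definition Bx (a b c d e f : R) := b*e - 2*(a*f + c*d).
Lemma decomp (P Q S p q r C Sn : R) : r <> 0 -> q*q - 4*(p*r) = -4 -> C^2+Sn^2 = 1 ->
  let u2p := p*C + (q/r)*Sn - (2/r)*C in let u2q := q*C+2*Sn in let u2r := r*C in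
  let u3p := p*Sn - (q/r)*C - (2/r)*Sn in let u3q := q*Sn-2*C in let u3r := r*Sn in
  let b1 := - Bx P Q S p q r / 4 in
  let b2 := Bx P Q S u2p u2q u2r / 4 in
  let b3 := Bx P Q S u3p u3q u3r / 4 in
  P = b1 * p + b2 * u2p + b3 * u3p /\
  Q = b1 * q + b2 * u2q + b3 * u3q /\
  S = b1 * r + b2 * u2r + b3 * u3r.
Proof. intros Hr K H3 u2p u2q u2r u3p u3q u3r b1 b2 b3.
  set (a := Bx P Q S (p - 2/r) q r). set (b := Bx P Q S (q/r) 2 0).
  assert (E1 : b2 * u2p + b3 * u3p = (C^2+Sn^2) * (a*(p-2/r) + b*(q/r))/4)
    by (unfold b2,b3,a,b,u2p,u3p,u2q,u3q,u2r,u3r,Bx; idtac; field; auto).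
  assert (E2 : b2 * u2q + b3 * u3q = (C^2+Sn^2) * (a*q + b*2)/4)
    by (unfold b2,b3,a,b,u2p,u3p,u2q,u3q,u2r,u3r,Bx; idtac; field; auto).
  assert (E3 : b2 * u2r + b3 * u3r = (C^2+Sn^2) * (a*r + b*0)/4)
    by (unfold b2,b3,a,b,u2p,u3p,u2q,u3q,u2r,u3r,Bx; idtac; field; auto).
  rewrite H3, Rmult_1_l in E1, E2, E3.
  assert (Hp : p = (q*q+4)/(4*r)) by (field_simplify_eq; [lra | auto]).
  rewrite !Rplus_assoc, E1, E2, E3. unfold b1, a, b, Bx. rewrite Hp.
  split; [|split]; field; auto.
Qed.

Ltac dtac := repeat match goal with
  | |- is_derive (fun _ => ?k) _ _ => apply Dc
  | |- is_derive (fun t => _ - _) _ _ => apply Ds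
  | |- is_derive (fun t => _ + _) _ _ => apply Dp
  | |- is_derive (fun t => _ * _) _ _ => apply Dm
  | |- is_derive (fun t => _ / _) _ _ => apply Dd
  | |- is_derive (fun t => cos _) _ _ => apply Dcos
  | |- is_derive (fun t => sin _) _ _ => apply Dsin
  | |- is_derive _ _ _ => eassumption
  | |- _ <> 0 => assumption
  end.

Theorem lemma2 (a : nat -> R) (lam c : R) (P1 Q1 R1 : R -> R) :
  q_hyp a -> 0 < lam -> 0 < c ->
  appell_sol (qfun a) lam P1 Q1 R1 ->
  is_lim P1 p_infty (sqrt lam) ->
  is_lim Q1 p_infty 0 ->
  is_lim R1 p_infty (/ sqrt lam) ->
  appell_sol (qfun a) lam (U2P P1 Q1 R1 c) (U2Q P1 Q1 R1 c) (U2R P1 Q1 R1 c) /\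
  appell_sol (qfun a) lam (U3P P1 Q1 R1 c) (U3Q P1 Q1 R1 c) (U3R P1 Q1 R1 c) /\
  (forall P Q S : R -> R, appell_sol (qfun a) lam P Q S ->
    exists b1 b2 b3 : R, forall x, 0 < x ->
      P x = b1 * P1 x + b2 * U2P P1 Q1 R1 c x + b3 * U3P P1 Q1 R1 c x /\
      Q x = b1 * Q1 x + b2 * U2Q P1 Q1 R1 c x + b3 * U3Q P1 Q1 R1 c x /\
      S x = b1 * R1 x + b2 * U2R P1 Q1 R1 c x + b3 * U3R P1 Q1 R1 c x).
Proof.
  intros _ hl hc H1 LP LQ LR.
  assert (K : forall x, 0 < x -> Q1 x * Q1 x - 4 * (P1 x * R1 x) = -4).
  { assert (Kc : forall x, 0 < x -> Q1 x * Q1 x - 4 * (P1 x * R1 x) = Q1 1 * Q1 1 - 4 * (P1 1 * R1 1)).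
    { intros x hx. pose proof (bil_const _ _ _ _ _ _ _ _ H1 H1 x hx) as E. unfold Bf in E. lra. }
    assert (L1 : is_lim (fun x => Q1 x * Q1 x - 4 * (P1 x * R1 x)) p_infty (0 * 0 - 4 * (sqrt lam * / sqrt lam))).
    { eapply is_lim_minus.
      - apply (is_lim_mult _ _ _ 0 0); auto. simpl. auto.
      - apply (is_lim_scal_l (fun x => P1 x * R1 x) 4 p_infty (sqrt lam * / sqrt lam)).
        apply (is_lim_mult _ _ _ (sqrt lam) (/ sqrt lam)); auto. simpl; auto.
      - simpl. reflexivity. }
    assert (L2 : is_lim (fun x => Q1 x * Q1 x - 4 * (P1 x * R1 x)) p_infty (Q1 1 * Q1 1 - 4 * (P1 1 * R1 1))).
    { eapply is_lim_ext_loc; [| apply is_lim_const]. exists 0. intros y hy. symmetry; apply Kc; auto. }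
    apply is_lim_unique in L1. apply is_lim_unique in L2. rewrite L1 in L2. injection L2 as L2.
    assert (hs : sqrt lam <> 0) by (apply Rgt_not_eq, sqrt_lt_R0; auto).
    rewrite Rinv_r in L2 by auto. intros x hx. rewrite Kc by auto. lra. }
  assert (Rnz : forall x, 0 < x -> R1 x <> 0).
  { intros x hx e. pose proof (K x hx) as k. rewrite e in k. nra. }
  assert (cont : forall z, 0 < z -> continuous (fun t => / R1 t) z).
  { intros z hz. apply (ex_derive_continuous (K:=R_AbsRing) (V:=R_NormedModule)).
    eexists. apply is_derive_inv; [apply (H1 z hz) | apply Rnz; auto]. }
  assert (G : forall x, 0 < x -> is_derive (gammaf R1 c) x (/ R1 x)).
  { intros x hx. unfold gammaf.
    apply (is_derive_RInt (fun t => / R1 t) (fun b => RInt (fun t => / R1 t) c b) c x).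
    - assert (hx2 : 0 < x / 2) by lra. exists (mkposreal _ hx2). intros y Hy.
      apply (RInt_correct (V:=R_CompleteNormedModule)). apply ex_RInt_continuous. intros z Hz. apply cont.
      change (Rabs (y - x) < x / 2) in Hy. apply Rabs_def2 in Hy.
      assert (0 < Rmin c y) by (apply Rmin_glb_lt; lra). lra.
    - apply cont; auto. }
  assert (SU2 : appell_sol (qfun a) lam (U2P P1 Q1 R1 c) (U2Q P1 Q1 R1 c) (U2R P1 Q1 R1 c)).
  {
    intros x hx. destruct (H1 x hx) as [hP [hQ hR]]. pose proof (G x hx) as hg.
    pose proof (Rnz x hx) as hnz.
    assert (Hp : P1 x = (Q1 x * Q1 x + 4) / (4 * R1 x)) by (pose proof (K x hx); field_simplify_eq; [lra | auto]).
    unfold U2P, U2Q, U2R. set (g := gammaf R1 c) in *. clearbody g. split; [|split]; (eapply Deq; [dtac | cbv beta; rewrite ?Hp; match goal with |- ?A = ?B => change (@eq R A B) end; field; auto]). }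
  assert (SU3 : appell_sol (qfun a) lam (U3P P1 Q1 R1 c) (U3Q P1 Q1 R1 c) (U3R P1 Q1 R1 c)).
  {
    intros x hx. destruct (H1 x hx) as [hP [hQ hR]]. pose proof (G x hx) as hg.
    pose proof (Rnz x hx) as hnz.
    assert (Hp : P1 x = (Q1 x * Q1 x + 4) / (4 * R1 x)) by (pose proof (K x hx); field_simplify_eq; [lra | auto]).
    unfold U3P, U3Q, U3R. set (g := gammaf R1 c) in *. clearbody g. split; [|split]; (eapply Deq; [dtac | cbv beta; rewrite ?Hp; match goal with |- ?A = ?B => change (@eq R A B) end; field; auto]). }
  split; [exact SU2|split; [exact SU3|]].
  intros P Q S HS.
  exists (- Bf P Q S P1 Q1 R1 1 / 4), (Bf P Q S (U2P P1 Q1 R1 c) (U2Q P1 Q1 R1 c) (U2R P1 Q1 R1 c) 1 / 4),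
    (Bf P Q S (U3P P1 Q1 R1 c) (U3Q P1 Q1 R1 c) (U3R P1 Q1 R1 c) 1 / 4).
  intros x hx.
  rewrite <- (bil_const _ _ _ _ _ _ _ _ HS H1 x hx), <- (bil_const _ _ _ _ _ _ _ _ HS SU2 x hx),
    <- (bil_const _ _ _ _ _ _ _ _ HS SU3 x hx).
  assert (Hpy : cos (2 * gammaf R1 c x) ^ 2 + sin (2 * gammaf R1 c x) ^ 2 = 1).
  { pose proof (sin2_cos2 (2 * gammaf R1 c x)) as h. unfold Rsqr in h. lra. }
  exact (decomp (P x) (Q x) (S x) (P1 x) (Q1 x) (R1 x) _ _ (Rnz x hx) (K x hx) Hpy).
Qed.
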